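(* For every integer $n\ge 1$, $$\Phi^{(4)}[aq^n; b; c, c'; x, y] = \Phi^{(4)}[a; b; c, c'; x, y] + \frac{ax(1-b)}{1-c} \sum_{k=1}^n q^{k-1} \Phi^{(4)}[aq^k; bq; cq, c'; x, y] + \frac{ay(1-b)}{1-c'} \sum_{k=1}^n q^{k-1} \Phi^{(4)}[aq^k; bq; c, c'q; xq, y]$$ and $$\Phi^{(4)}[aq^{-n}; b; c, c'; x, y] = \Phi^{(4)}[a; b; c, c'; x, y] - \frac{ax(1-b)}{1-c} \sum_{k=1}^n q^{-k} \Phi^{(4)}[aq^{1-k}; bq; cq, c'; x, y] - \frac{ay(1-b)}{1-c'} \sum_{k=1}^n q^{-k} \Phi^{(4)}[aq^{1-k}; bq; c, c'q; xq, y].$$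
   Context: Let $q$ be a complex number with $0<|q|<1$. For complex $z$ and integer $m\ge 0$, $(z;q)_m=\prod_{j=0}^{m-1}(1-zq^j)$, with $(z;q)_0=1$. The $q$-Appell function $\Phi^{(4)}$ is $$\Phi^{(4)}[a; b; c, c'; x, y] = \sum_{m, n \geq 0} \frac{(a; q)_{m+n} (b; q)_{m+n}}{(q; q)_m (q; q)_n (c; q)_m (c'; q)_n} x^m y^n.$$ Identities are understood as identities of power series in $x,y$ (formal, or convergent for small $|x|,|y|$), with complex parameters chosen so that no denominator occurring vanishes. *)

(* Defs.v *)
From HB Require Import structures.
From mathcomp Require Import all_boot all_order all_algebra.
From mathcomp Require Import reals complex.
Set Implicit Arguments. Unset Strict Implicit. Unset Printing Implicit Defensive.
Import Order.TTheory GRing.Theory Num.Theory.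
Local Open Scope ring_scope.

Definition qpoch {F : fieldType} (z q : F) (m : nat) : F :=
  \prod_(j < m) (1 - z * q ^+ j).

(* A formal double power series in x, y: its coefficient of x^m y^n. *)
Definition fps (F : Type) := nat -> nat -> F.

Definition Phi4 {F : fieldType} (q a b c c' : F) : fps F :=
  fun m n => qpoch a q (m + n) * qpoch b q (m + n) /
             (qpoch q q m * qpoch q q n * qpoch c q m * qpoch c' q n).

(* x * S *)
Definition xmul {F : fieldType} (S : fps F) : fps F :=
  fun m n => if m is m'.+1 then S m' n else 0.
(* y * S *)
Definition ymul {F : fieldType} (S : fps F) : fps F :=
  fun m n => if n is n'.+1 then S m n' else 0.
(* S(xq, y) *)
Definition xdil {F : fieldType} (q : F) (S : fps F) : fps F :=
  fun m n => q ^+ m * S m n.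

(* Main.v *)
Require Import Defs.
From HB Require Import structures.
From mathcomp Require Import all_boot all_order all_algebra.
From mathcomp Require Import reals complex.
From mathcomp Require Import ring.
Import Order.TTheory GRing.Theory Num.Theory.
Local Open Scope ring_scope.

Section Aux.
Variable F : fieldType.

Lemma qpS (z q : F) N : qpoch z q N.+1 = (1 - z) * qpoch (z*q) q N.
Proof.
rewrite /qpoch big_ord_recl expr0 mulr1; congr (_ * _); apply eq_bigr => j _.
by rewrite lift0 exprS mulrA.
Qed.

Lemma qpSr (z q : F) N : qpoch z q N.+1 = qpoch z q N * (1 - z * q ^+ N).
Proof. by rewrite /qpoch big_ord_recr. Qed.

Lemma qp0 (z q : F) : qpoch z q 0 = 1.
Proof. by rewrite /qpoch big_ord0. Qed.

Lemma qp_neq0 (z q : F) N : (forall j, z * q ^+ j != 1) -> qpoch z q N != 0.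
Proof.
move=> h; rewrite /qpoch; apply/prodf_neq0 => j _.
by rewrite subr_eq0 eq_sym.
Qed.
End Aux.
Arguments qpS {F}. Arguments qpSr {F}. Arguments qp0 {F}. Arguments qp_neq0 {F}.

Section Step.
Variables (F : fieldType) (q b c c' : F).
Hypotheses (hq : forall j, q * q ^+ j != 1) (hc : forall j, c * q ^+ j != 1)
  (hc' : forall j, c' * q ^+ j != 1).

Lemma nz1 (z : F) : (forall j, z * q ^+ j != 1) -> 1 - z != 0.
Proof. by move=> h; rewrite subr_eq0 eq_sym -[z]mulr1 -(expr0 q). Qed.

Lemma shiftq (z : F) : (forall j, z * q ^+ j != 1) -> forall j, z * q * q ^+ j != 1.
Proof. by move=> h j; rewrite -mulrA -exprS. Qed.

Lemma step (a0 : F) i j :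
  Phi4 q (a0*q) b c c' i j = Phi4 q a0 b c c' i j
   + a0*(1-b)/(1-c) * xmul (Phi4 q (a0*q) (b*q) (c*q) c') i j
   + a0*(1-b)/(1-c') * ymul (xdil q (Phi4 q (a0*q) (b*q) c (c'*q))) i j.
Proof.
have hQ := fun N => @qp_neq0 _ _ _ N hq.
have hC := fun N => @qp_neq0 _ _ _ N (@shiftq _ hc).
have hC' := fun N => @qp_neq0 _ _ _ N (@shiftq _ hc').
have h1c := @nz1 _ hc. have h1c' := @nz1 _ hc'.
have hqm : forall m, 1 - q * q ^+ m != 0.
  by move=> m; rewrite subr_eq0 eq_sym.
case: i => [|m]; case: j => [|n]; rewrite /xmul /ymul /xdil /Phi4.
- by rewrite addn0 !qp0 !mulr0 !addr0.
- rewrite !add0n !qp0 (qpS a0) (qpSr (a0*q)) (qpS b) (qpS c') (qpSr q q).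
  rewrite !expr0.
  field; rewrite ?hQ ?hC ?hC' ?h1c ?h1c' ?hqm //.
- rewrite !addn0 !qp0 (qpS a0) (qpSr (a0*q)) (qpS b) (qpS c) (qpSr q q).
  field; rewrite ?hQ ?hC ?hC' ?h1c ?h1c' ?hqm //.
- rewrite !addSn !addnS (qpS a0) (qpSr (a0*q)) (qpS b) (qpS c) (qpS c') !(qpSr q q).
  rewrite !exprS exprD.
  field; rewrite ?hQ ?hC ?hC' ?h1c ?h1c' ?hqm //.
Qed.
End Step.

Lemma main_gen (F : fieldType) (q a b c c' : F)
  (qnz : q != 0) (hq : forall j, q * q ^+ j != 1)
  (hc : forall j : nat, c * q ^+ j != 1)
  (hc' : forall j : nat, c' * q ^+ j != 1)
  (n : nat) :
  (forall i j : nat,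
    Phi4 q (a * q ^+ n) b c c' i j =
      Phi4 q a b c c' i j
      + a * (1 - b) / (1 - c) *
          \sum_(1 <= k < n.+1)
             q ^+ (k - 1) * xmul (Phi4 q (a * q ^+ k) (b * q) (c * q) c') i j
      + a * (1 - b) / (1 - c') *
          \sum_(1 <= k < n.+1)
             q ^+ (k - 1) *
               ymul (xdil q (Phi4 q (a * q ^+ k) (b * q) c (c' * q))) i j)
  /\
  (forall i j : nat,
    Phi4 q (a * q ^- n) b c c' i j =
      Phi4 q a b c c' i j
      - a * (1 - b) / (1 - c) *
          \sum_(1 <= k < n.+1)
             q ^- k * xmul (Phi4 q (a * q ^- (k - 1)) (b * q) (c * q) c') i j
      - a * (1 - b) / (1 - c') *
          \sum_(1 <= k < n.+1)
             q ^- k *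
               ymul (xdil q (Phi4 q (a * q ^- (k - 1)) (b * q) c (c' * q))) i j).
Proof.
split.
- elim: n => [|n IH] i j.
    by rewrite !big_geq // expr0 mulr1 !mulr0 !addr0.
  have E : a * q ^+ n.+1 = a * q ^+ n * q by rewrite exprSr mulrA.
  rewrite !(big_nat_recr n.+1 1) //= ?subn1 ?subSS ?subn0 /= E (@step _ q b c c' hq hc hc' (a * q ^+ n) i j) IH.
  field; rewrite ?(@nz1 _ q) //.
- elim: n => [|n IH] i j.
    by rewrite !big_geq // expr0 invr1 mulr1 !mulr0 !subr0.
  have E : a * q ^- n.+1 * q = a * q ^- n.
    by rewrite exprSr; field; rewrite expf_neq0.
  have S := (@step _ q b c c' hq hc hc' (a * q ^- n.+1) i j).
  rewrite E IH in S.
  rewrite !(big_nat_recr n.+1 1) //= subn1 /=.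
  have -> : Phi4 q (a * q ^- n.+1) b c c' i j =
    Phi4 q a b c c' i j
      - a * (1 - b) / (1 - c) *
          \sum_(1 <= k < n.+1)
             q ^- k * xmul (Phi4 q (a * q ^- (k - 1)) (b * q) (c * q) c') i j
      - a * (1 - b) / (1 - c') *
          \sum_(1 <= k < n.+1)
             q ^- k *
               ymul (xdil q (Phi4 q (a * q ^- (k - 1)) (b * q) c (c' * q))) i j
   - a * q ^- n.+1 * (1 - b) / (1 - c) * xmul (Phi4 q (a * q ^- n) (b * q) (c * q) c') i j
   - a * q ^- n.+1 * (1 - b) / (1 - c') * ymul (xdil q (Phi4 q (a * q ^- n) (b * q) c (c' * q))) i j.
    by rewrite S; ring.
  field; rewrite ?(@nz1 _ q) // expf_neq0 //.
Qed.


Theorem theorem14 (R : realType) (q a b c c' : R[i])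
  (hq0 : 0 < `|q|) (hq1 : `|q| < 1)
  (hc : forall j : nat, c * q ^+ j != 1)
  (hc' : forall j : nat, c' * q ^+ j != 1)
  (n : nat) (hn : (1 <= n)%N) :
  (forall i j : nat,
    Phi4 q (a * q ^+ n) b c c' i j =
      Phi4 q a b c c' i j
      + a * (1 - b) / (1 - c) *
          \sum_(1 <= k < n.+1)
             q ^+ (k - 1) * xmul (Phi4 q (a * q ^+ k) (b * q) (c * q) c') i j
      + a * (1 - b) / (1 - c') *
          \sum_(1 <= k < n.+1)
             q ^+ (k - 1) *
               ymul (xdil q (Phi4 q (a * q ^+ k) (b * q) c (c' * q))) i j)
  /\
  (forall i j : nat,
    Phi4 q (a * q ^- n) b c c' i j =
      Phi4 q a b c c' i j
      - a * (1 - b) / (1 - c) *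
          \sum_(1 <= k < n.+1)
             q ^- k * xmul (Phi4 q (a * q ^- (k - 1)) (b * q) (c * q) c') i j
      - a * (1 - b) / (1 - c') *
          \sum_(1 <= k < n.+1)
             q ^- k *
               ymul (xdil q (Phi4 q (a * q ^- (k - 1)) (b * q) c (c' * q))) i j).
Proof.
have qnz : q != 0 by rewrite -normr_gt0.
have hq : forall j, q * q ^+ j != 1.
  move=> j; apply/eqP => h.
  have := congr1 Num.norm h; rewrite normr1 -exprS normrX => e.
  have := exprn_ilt1 j.+1 (normr_ge0 q) hq1; rewrite e ltxx //.
exact: main_gen.
Qed.
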